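(* Let $\mathcal{X}$ be a non-degenerate fuzzy random variable with values in $\mathcal{F}_c(\mathbb{R})$ such that the real random variable $s_{\mathcal{X}}(u,\alpha)$ has a unique median for each $u\in\{-1,1\}$ and $\alpha\in[0,1]$. Then $\mathrm{Med}_s(\mathcal{X})=\mathrm{Med}(\mathcal{X};D_{FP})=\{\mathrm{med}_{Si}(\mathcal{X})\}=\{\mathrm{med}_{Gr}(\mathcal{X})\}$.
   Context: $\mathcal{F}_c(\mathbb{R})$ is the set of functions $A:\mathbb{R}\to[0,1]$ whose $\alpha$-levels $A_\alpha=\{x:A(x)\ge\alpha\}$ ($\alpha\in(0,1]$) and $A_0=\overline{\{x:A(x)>0\}}$ are non-empty compact intervals. Support function: $s_A(u,\alpha)=\sup\{uv:v\in A_\alpha\}$, $u\in\{-1,1\}$, $\alpha\in[0,1]$. A fuzzy random variable on $(\Omega,\mathcal{A},\mathbb{P})$ is a map $\mathcal{X}:\Omega\to\mathcal{F}_c(\mathbb{R})$ with each $\omega\mapsto\mathcal{X}(\omega)_\alpha$ a random compact set; $s_{\mathcal{X}}(u,\alpha)(\omega)=s_{\mathcal{X}(\omega)}(u,\alpha)$. Non-degenerate means not almost surely equal to a constant element of $\mathcal{F}_c(\mathbb{R})$. For a real random variable $X$, $\mathrm{Med}(X)=[\underline{\mathrm{med}}(X),\overline{\mathrm{med}}(X)]$ is its set of medians, $\mathrm{med}(X)$ its midpoint, $\mathrm{MAD}(X)=\mathrm{med}(|X-\mathrm{med}(X)|)$. $\mathrm{med}_{Si}(\mathcal{X})$ is the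 element of $\mathcal{F}_c(\mathbb{R})$ with $s_{\mathrm{med}_{Si}(\mathcal{X})}(u,\alpha)=\mathrm{med}(s_{\mathcal{X}}(u,\alpha))$ for all $u,\alpha$. $\mathrm{med}_{Gr}(\mathcal{X})$ (Grzegorzewski median) is the fuzzy number with membership $\mathrm{med}_{Gr}(\mathcal{X})(t)=\sup\{\inf_{\omega}\mathcal{X}(\omega)(X(\omega)): X:\Omega\to\mathbb{R}\text{ Borel measurable},\ t\in\mathrm{Med}(X)\}$; equivalently $(\mathrm{med}_{Gr}(\mathcal{X}))_\alpha=[\underline{\mathrm{med}}(\inf\mathcal{X}_\alpha),\overline{\mathrm{med}}(\sup\mathcal{X}_\alpha)]$ for all $\alpha$. $\mathrm{Med}_s(\mathcal{X})$ is the set of $A\in\mathcal{F}_c(\mathbb{R})$ with $s_A(u,\alpha)\in\mathrm{Med}(s_{\mathcal{X}}(u,\alpha))$ for all $u,\alpha$. $D_{FP}(A;\mathcal{X})=(1+O(A;\mathcal{X}))^{-1}$ with $O(A;\mathcal{X})=\sup_{(u,\alpha)}\frac{|s_A(u,\alpha)-\mathrm{med}(s_{\mathcal{X}}(u,\alpha))|}{\mathrm{MAD}(s_{\mathcal{X}}(u,\alpha))}$, and $\mathrm{Med}(\mathcal{X};D_{FP})$ is the set of maximizers of $D_{FP}(\cdot;\mathcal{X})$ over $\mathcal{F}_c(\mathbb{R})$. *)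

(* Defs.v *)
From HB Require Import structures.
From mathcomp Require Import all_boot all_order all_algebra.
From mathcomp Require Import all_classical all_reals all_analysis.
Set Implicit Arguments. Unset Strict Implicit. Unset Printing Implicit Defensive.
Import Order.TTheory GRing.Theory Num.Theory numFieldNormedType.Exports.
Local Open Scope classical_set_scope.
Local Open Scope ring_scope.

Section FuzzyDefs.
Context {R : realType}.

Definition level (A : R -> R) (a : R) : set R :=
  if a == 0 then closure [set x | 0 < A x] else [set x | a <= A x].

Definition isFc (A : R -> R) : Prop :=
  (forall x, 0 <= A x <= 1) /\
  (forall a, 0 <= a <= 1 -> exists l r : R, l <= r /\ level A a = [set x | l <= x <= r]).

Definition supf (A : R -> R) (u a : R) : R := sup [set u * v | v in level A a].

Definition dir_set : set R := [set -1; 1].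
Definition unit_int : set R := [set a | 0 <= a <= 1].

Context {d : measure_display} {T : measurableType d} (P : probability T R).

Definition Med (X : T -> R) : set R :=
  [set m | ((2^-1)%:E <= P [set w | (X w <= m)%R])%E /\ ((2^-1)%:E <= P [set w | (m <= X w)%R])%E].
Definition lmed (X : T -> R) : R := inf (Med X).
Definition umed (X : T -> R) : R := sup (Med X).
Definition med (X : T -> R) : R := (lmed X + umed X) / 2.
Definition MAD (X : T -> R) : R := med (fun w => `|X w - med X|).

Definition fuzzy_rv (X : T -> R -> R) : Prop :=
  (forall w, isFc (X w)) /\
  (forall a, 0 <= a <= 1 -> forall K : set R, compact K ->
     measurable [set w | level (X w) a `&` K !=set0]).

Definition nondegenerate_frv (X : T -> R -> R) : Prop :=
  ~ exists A, isFc A /\ {ae P, forall w, X w = A}.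

Definition sX (X : T -> R -> R) (u a : R) : T -> R := fun w => supf (X w) u a.

Definition Med_s (X : T -> R -> R) : set (R -> R) :=
  [set A | isFc A /\ forall u a, dir_set u -> unit_int a -> Med (sX X u a) (supf A u a)].

(* fratio |s_A - med| / MAD in extended reals: c/0 = +oo for c > 0, 0/0 = 0 *)
Definition fratio (c m : R) : \bar R :=
  if m == 0 then (if c == 0 then 0%E else +oo%E) else (c / m)%:E.

Definition Oout (A : R -> R) (X : T -> R -> R) : \bar R :=
  ereal_sup [set r | exists u a, [/\ dir_set u, unit_int a &
      r = fratio `|supf A u a - med (sX X u a)| (MAD (sX X u a))]].

(* D_FP = (1 + O)^-1, with (1 + oo)^-1 = 0 *)
Definition D_FP (A : R -> R) (X : T -> R -> R) : R :=
  match Oout A X with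
  | EFin o => (1 + o)^-1
  | _ => 0
  end.

Definition Med_DFP (X : T -> R -> R) : set (R -> R) :=
  [set A | isFc A /\ forall B, isFc B -> D_FP B X <= D_FP A X].

Definition med_Gr (X : T -> R -> R) : R -> R := fun t =>
  sup [set inf (range (fun w => X w (Y w))) |
       Y in [set Y : T -> R | measurable_fun setT Y /\ Med Y t]].

End FuzzyDefs.

(* Main.v *)
Require Import Defs.
From HB Require Import structures.
From mathcomp Require Import all_boot all_order all_algebra.
From mathcomp Require Import all_classical all_reals all_analysis.
From mathcomp Require Import ring lra.
Import Order.TTheory GRing.Theory Num.Theory numFieldNormedType.Exports.
Local Open Scope classical_set_scope.
Local Open Scope ring_scope.
Set Implicit Arguments. Unset Strict Implicit. Unset Printing Implicit Defensive.

Section Fuzzy.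
Context {R : realType}.
Implicit Types (A B : R -> R).

Definition lA A a : R := - supf A (-1) a.
Definition rA A a : R := supf A 1 a.

Lemma sup_cc (l r : R) : l <= r -> sup [set x | l <= x <= r] = r.
Proof.
move=> lr; have -> : [set x | l <= x <= r] = `[l, r]%classic.
  by apply/seteqP; split => x /=; rewrite in_itv.
exact: sup_itvcc.
Qed.

Lemma supf_itv A a l r : l <= r -> level A a = [set x | l <= x <= r] ->
  supf A 1 a = r /\ supf A (-1) a = - l.
Proof.
move=> lr E; rewrite /supf E; split.
  have -> : [set 1 * v | v in [set x | l <= x <= r]] = [set x | l <= x <= r].
    apply/seteqP; split => x /=.
      by move=> [v hv <-]; rewrite mul1r.
    by move=> hx; exists x => //; rewrite mul1r.
  exact: sup_cc.
have -> : [set -1 * v | v in [set x | l <= x <= r]] = [set x | - r <= x <= - l].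
  apply/seteqP; split => x /=.
    by move=> [v /andP[h1 h2] <-]; rewrite mulN1r !lerN2 h1 h2.
  move=> /andP[h1 h2]; exists (- x); last by rewrite mulN1r opprK.
  by rewrite lerNr h2 lerNl h1.
by apply: sup_cc; rewrite lerN2.
Qed.

Lemma level_lr A a : isFc A -> 0 <= a <= 1 ->
  level A a = [set x | lA A a <= x <= rA A a] /\ lA A a <= rA A a.
Proof.
move=> [_ hA] ha; have [l [r [lr E]]] := hA a ha.
have [h1 h2] := supf_itv lr E.
by rewrite /lA /rA h1 h2 opprK.
Qed.

Lemma Fc_ge0 A x : isFc A -> 0 <= A x.
Proof. by move=> [h _]; case/andP: (h x). Qed.
Lemma Fc_le1 A x : isFc A -> A x <= 1.
Proof. by move=> [h _]; case/andP: (h x). Qed.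

Lemma levelE A a : a != 0 -> level A a = [set x | a <= A x].
Proof. by rewrite /level => /negbTE ->. Qed.
Lemma level0E A : level A 0 = closure [set x | 0 < A x].
Proof. by rewrite /level eqxx. Qed.

Lemma level_sub A a b : 0 <= a -> a <= b -> level A b `<=` level A a.
Proof.
move=> a0 ab x; have [b0'|b0] := eqVneq b 0.
  move: ab; rewrite b0' => ab.
  by have -> : a = 0 by apply/le_anti; rewrite a0 ab.
rewrite levelE //= => bx.
have [->|a0'] := eqVneq a 0.
  rewrite level0E; apply: subset_closure => /=.
  by apply: lt_le_trans bx; rewrite lt_neqAle eq_sym b0 (le_trans a0 ab).
by rewrite levelE //=; apply: le_trans bx.
Qed.

Lemma lr_mono A a b : isFc A -> 0 <= a -> a <= b -> b <= 1 ->
  lA A a <= lA A b /\ rA A b <= rA A a.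
Proof.
move=> hA a0 ab b1.
have ha : 0 <= a <= 1 by rewrite a0 (le_trans ab b1).
have hb : 0 <= b <= 1 by rewrite (le_trans a0 ab) b1.
have [Ea _] := level_lr hA ha; have [Eb lrb] := level_lr hA hb.
have S := level_sub (A:=A) a0 ab; rewrite Ea Eb in S.
have /S /andP[h1 _] : lA A b <= lA A b <= rA A b by rewrite lexx lrb.
have /S /andP[_ h2] : lA A b <= rA A b <= rA A b by rewrite lexx lrb.
by [].
Qed.

Lemma lA_left A b c : isFc A -> 0 < b <= 1 ->
  (forall g, 0 < g < b -> lA A g <= c) -> lA A b <= c.
Proof.
move=> hA /andP[b0 b1] H; rewrite leNgt; apply/negP => cb.
have hb : 0 <= b <= 1 by rewrite ltW.
have [Eb lrb] := level_lr hA hb.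
have Ac : b <= A c.
  rewrite leNgt; apply/negP => Acb.
  pose g := (A c + b) / 2.
  have g0 : 0 < g by rewrite divr_gt0 // ltr_wpDl // (Fc_ge0 _ hA).
  have gb : g < b by rewrite ltr_pdivrMr // mulr2n mulrDr mulr1 ltrD2r.
  have hg : 0 <= g <= 1 by rewrite ltW // (le_trans (ltW gb)).
  have [Eg _] := level_lr hA hg.
  have : level A g c.
    rewrite Eg /= H ?g0 ?gb //=.
    have [_ h2] := lr_mono hA (ltW g0) (ltW gb) b1.
    by apply: le_trans h2; apply: le_trans lrb; apply: ltW.
  rewrite levelE ?gt_eqF //= => cg.
  have : g < g by apply: le_lt_trans cg _; rewrite ltr_pdivlMr // mulr2n mulrDr mulr1 ltrD2l.
  by rewrite ltxx.
have : level A b c by rewrite levelE ?gt_eqF.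
by rewrite Eb /= leNgt cb.
Qed.

Lemma rA_left A b c : isFc A -> 0 < b <= 1 ->
  (forall g, 0 < g < b -> c <= rA A g) -> c <= rA A b.
Proof.
move=> hA /andP[b0 b1] H; rewrite leNgt; apply/negP => cb.
have hb : 0 <= b <= 1 by rewrite ltW.
have [Eb lrb] := level_lr hA hb.
have Ac : b <= A c.
  rewrite leNgt; apply/negP => Acb.
  pose g := (A c + b) / 2.
  have g0 : 0 < g by rewrite divr_gt0 // ltr_wpDl // (Fc_ge0 _ hA).
  have gb : g < b by rewrite ltr_pdivrMr // mulr2n mulrDr mulr1 ltrD2r.
  have hg : 0 <= g <= 1 by rewrite ltW // (le_trans (ltW gb)).
  have [Eg _] := level_lr hA hg.
  have : level A g c.
    rewrite Eg /= H ?g0 ?gb // andbT.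
    have [h1 _] := lr_mono hA (ltW g0) (ltW gb) b1.
    by apply: le_trans h1 _; apply: le_trans lrb _; apply: ltW.
  rewrite levelE ?gt_eqF //= => cg.
  have : g < g by apply: le_lt_trans cg _; rewrite ltr_pdivlMr // mulr2n mulrDr mulr1 ltrD2l.
  by rewrite ltxx.
have : level A b c by rewrite levelE ?gt_eqF.
by rewrite Eb /= => /andP[_]; rewrite leNgt cb.
Qed.

Lemma closure_sub_closed (S C : set R) : closed C -> S `<=` C -> closure S `<=` C.
Proof.
move=> cC SC x hx; apply: cC => B /hx [y [Sy By]]; exists y; split => //; exact: SC.
Qed.

Lemma lA_right0 A c : isFc A ->
  (forall g, 0 < g <= 1 -> c <= lA A g) -> c <= lA A 0.
Proof.
move=> hA H.
have h0 : 0 <= (0:R) <= 1 by rewrite lexx ler01.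
have [E0 lr0] := level_lr hA h0.
have : level A 0 (lA A 0) by rewrite E0 /= lexx lr0.
suff sub : closure [set x | 0 < A x] `<=` [set x | c <= x].
  by rewrite level0E => /sub.
apply: closure_sub_closed; first exact: closed_ge.
move=> x /= Ax.
pose g := Num.min (A x) 1.
have hg : 0 < g <= 1 by rewrite lt_min Ax ltr01 ge_min lexx orbT.
have hg' : 0 <= g <= 1 by case/andP: hg => h1 h2; rewrite ltW.
have [Eg _] := level_lr hA hg'.
have : level A g x by rewrite levelE ?gt_eqF //= ?ge_min ?lexx // (andP hg).1.
by rewrite Eg /= => /andP[h _]; apply: le_trans h; apply: H.
Qed.

Lemma rA_right0 A c : isFc A ->
  (forall g, 0 < g <= 1 -> rA A g <= c) -> rA A 0 <= c.
Proof.
move=> hA H.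
have h0 : 0 <= (0:R) <= 1 by rewrite lexx ler01.
have [E0 lr0] := level_lr hA h0.
have : level A 0 (rA A 0) by rewrite E0 /= lexx lr0.
suff sub : closure [set x | 0 < A x] `<=` [set x | x <= c].
  by rewrite level0E => /sub.
apply: closure_sub_closed; first exact: closed_le.
move=> x /= Ax.
pose g := Num.min (A x) 1.
have hg : 0 < g <= 1 by rewrite lt_min Ax ltr01 ge_min lexx orbT.
have hg' : 0 <= g <= 1 by case/andP: hg => h1 h2; rewrite ltW.
have [Eg _] := level_lr hA hg'.
have : level A g x by rewrite levelE ?gt_eqF //= ?ge_min ?lexx // (andP hg).1.
by rewrite Eg /= => /andP[_ h]; apply: le_trans h _; apply: H.
Qed.

Lemma Fc_eq A B : isFc A -> isFc B ->
  (forall a, 0 <= a <= 1 -> lA A a = lA B a /\ rA A a = rA B a) -> A = B.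
Proof.
move=> hA hB H.
have E a : 0 <= a <= 1 -> level A a = level B a.
  move=> ha; have [-> _] := level_lr hA ha; have [-> _] := level_lr hB ha.
  by have [-> ->] := H a ha.
have key (C D : R -> R) : isFc C -> isFc D -> (forall a, 0 <= a <= 1 -> level C a = level D a) ->
    forall x, C x <= D x.
  move=> hC hD E' x; have [C0|Cx] := eqVneq (C x) 0.
    by rewrite C0 (Fc_ge0 _ hD).
  have hC' : 0 <= C x <= 1 by rewrite (Fc_ge0 _ hC) (Fc_le1 _ hC).
  have : level C (C x) x by rewrite levelE //=.
  by rewrite E' // levelE.
apply: funext => x; apply/le_anti; rewrite key //= key // => a ha.
by rewrite E.
Qed.

Section Build.
Variables (lm um : R -> R).
Hypothesis lmum : forall a, 0 <= a <= 1 -> lm a <= um a.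
Hypothesis mono : forall a b, 0 <= a -> a <= b -> b <= 1 -> lm a <= lm b /\ um b <= um a.
Hypothesis lmleft : forall b t, 0 < b <= 1 -> (forall g, 0 < g < b -> lm g <= t) -> lm b <= t.
Hypothesis umleft : forall b t, 0 < b <= 1 -> (forall g, 0 < g < b -> t <= um g) -> t <= um b.
Hypothesis lmright : forall t, lm 0 < t -> exists2 g, 0 < g <= 1 & lm g < t.
Hypothesis umright : forall t, t < um 0 -> exists2 g, 0 < g <= 1 & t < um g.

Definition St t := [set a : R | (0 <= a <= 1) && (lm a <= t <= um a)].
Definition Mb t := sup (St t).

Lemma St_sup t : (St t !=set0) -> has_sup (St t).
Proof. by move=> ne; split => //; exists 1 => a /andP[/andP[_ ?] _]. Qed.

Lemma St_ub t a : St t a -> a <= Mb t.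
Proof. by move=> h; apply: sup_upper_bound => //; apply: St_sup; exists a. Qed.

Lemma Mb_pos t : 0 < Mb t -> St t !=set0.
Proof.
move=> h; apply/set0P/negP => /eqP E; move: h; by rewrite /Mb E sup0 ltxx.
Qed.

Lemma St_down t a b : St t a -> 0 <= b -> b <= a -> St t b.
Proof.
move=> /andP[/andP[a0 a1] /andP[h1 h2]] b0 ba.
have [m1 m2] := mono b0 ba a1.
by rewrite /St /= b0 (le_trans ba a1) (le_trans m1 h1) (le_trans h2 m2).
Qed.

Lemma Mb_01 t : 0 <= Mb t <= 1.
Proof.
have [E|/set0P[a Sa]] := eqVneq (St t) set0.
  by rewrite /Mb E sup0 lexx ler01.
rewrite (le_trans _ (St_ub Sa)) ?(andP (andP Sa).1).1 //=.
by apply: ge_sup; [exists a | move=> b /andP[/andP[_ ?] _]].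
Qed.

Lemma Mb_level a : 0 < a <= 1 -> [set t | a <= Mb t] = [set t | lm a <= t <= um a].
Proof.
move=> /andP[a0 a1]; apply/seteqP; split => t /=.
  move=> aM.
  have ne : St t !=set0 by apply: Mb_pos; apply: lt_le_trans aM.
  have hg g : 0 < g < a -> St t g.
    move=> /andP[g0 ga]; have [e Se ge] := sup_gt ne (lt_le_trans ga aM).
    by apply: St_down Se (ltW g0) (ltW ge).
  apply/andP; split.
    by apply: lmleft; rewrite ?a0 ?a1 // => g /hg /andP[_ /andP[]].
  by apply: umleft; rewrite ?a0 ?a1 // => g /hg /andP[_ /andP[]].
by move=> h; apply: St_ub; rewrite /St /= h (ltW a0) a1.
Qed.

Lemma Mb_level0 : closure [set t | 0 < Mb t] = [set t | lm 0 <= t <= um 0].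
Proof.
have l01 : 0 <= (0:R) <= 1 by rewrite lexx ler01.
apply/seteqP; split.
  apply: closure_sub_closed.
    have -> : [set t | lm 0 <= t <= um 0] = [set t | lm 0 <= t] `&` [set t | t <= um 0].
      by apply/seteqP; split => t /=; [move=> /andP[] | move=> [-> ->]].
    by apply: closedI; [apply: closed_ge | apply: closed_le].
  move=> t /= /Mb_pos [a /andP[/andP[a0 a1] /andP[h1 h2]]].
  have [m1 m2] := mono (lexx 0) a0 a1.
  by rewrite (le_trans m1 h1) (le_trans h2 m2).
move=> x /= /andP[x1 x2] B /nbhs_ballP [e e0 /= eB].
have [g1 /andP[g10 g11] hg1] := lmright (t:= lm 0 + e) ltac:(by rewrite ltrDl).
have [g2 /andP[g20 g21] hg2] := umright (t:= um 0 - e) ltac:(by rewrite ltrBlDr ltrDl).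
pose g := Num.min g1 g2.
have g0 : 0 < g by rewrite lt_min g10 g20.
have g1' : g <= 1 by rewrite ge_min g11.
have [m1 _] := mono (ltW g0) (ltac:(by rewrite ge_min lexx) : g <= g1) g11.
have [_ m2] := mono (ltW g0) (ltac:(by rewrite ge_min lexx orbT) : g <= g2) g21.
have lu : lm g <= um g by apply: lmum; rewrite (ltW g0) g1'.
have [m01 m02] := mono (lexx 0) (ltW g0) g1'.
pose y := Num.max (lm g) (Num.min x (um g)).
have yS : St y g.
  rewrite /St /= (ltW g0) g1' /= /y le_max lexx /= ge_max lu /= ge_min lexx orbT.
  done.
exists y; split.
  by rewrite /= (lt_le_trans g0) // St_ub.
apply: eB; rewrite ball_itv /= in_itv /=.
rewrite /y; have [xl|xl] := leP (lm g) x.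
  have [xu|xu] := leP x (um g).
    rewrite ?(min_l xu) ?(max_r xl); apply/andP; split; lra.
  rewrite ?(min_r (ltW xu)) ?(max_r lu); apply/andP; split; lra.
have xu : x <= um g by apply: le_trans (ltW xl) lu.
rewrite ?(min_l xu) ?(max_l (ltW xl)); apply/andP; split; lra.
Qed.

Lemma Mb_Fc : isFc Mb.
Proof.
split; first exact: Mb_01.
move=> a /andP[a0 a1]; exists (lm a), (um a); split.
  by apply: lmum; rewrite a0 a1.
have [->|an] := eqVneq a 0.
  by rewrite level0E Mb_level0.
by rewrite levelE // Mb_level // lt_neqAle eq_sym an a0 a1.
Qed.

Lemma Mb_lr a : 0 <= a <= 1 -> lA Mb a = lm a /\ rA Mb a = um a.
Proof.
move=> ha; have [l [r [lr E]]] := (Mb_Fc.2 a ha).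
have [h1 h2] := supf_itv lr E.
have : [set x | l <= x <= r] = [set x | lm a <= x <= um a].
  rewrite -E; have [->|an] := eqVneq a 0.
    by rewrite level0E Mb_level0.
  by rewrite levelE // Mb_level // lt_neqAle eq_sym an (andP ha).1 (andP ha).2.
move=> E2.
have hl : lm a <= um a by apply: lmum.
have [l1 r1] : l = lm a /\ r = um a.
  have := E2; move/seteqP => [S1 S2].
  have /S1 /andP[p1 p2] : l <= l <= r by rewrite lexx lr.
  have /S1 /andP[p3 p4] : l <= r <= r by rewrite lexx lr.
  have /S2 /andP[p5 p6] : lm a <= lm a <= um a by rewrite lexx hl.
  have /S2 /andP[p7 p8] : lm a <= um a <= um a by rewrite lexx hl.
  by split; apply/le_anti; rewrite ?p1 ?p4 ?p5 ?p8.
by rewrite /lA /rA h1 h2 l1 r1 opprK.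
Qed.

End Build.
End Fuzzy.
Section Meas.
Context {R : realType} {d : measure_display} {T : measurableType d} (P : probability T R).

Lemma mle (Y : T -> R) c : measurable_fun setT Y -> measurable [set w | Y w <= c].
Proof.
move=> mY; have := mY measurableT _ (measurable_itv `]-oo, c]).
by rewrite setTI; congr measurable; apply/seteqP; split => w /=; rewrite in_itv.
Qed.

Lemma mge (Y : T -> R) c : measurable_fun setT Y -> measurable [set w | c <= Y w].
Proof.
move=> mY; have := mY measurableT _ (measurable_itv `[c, +oo[).
by rewrite setTI; congr measurable; apply/seteqP; split => w /=; rewrite in_itv /= andbT.
Qed.

Lemma med1 (Y : T -> R) m : Med P Y = [set m] -> med P Y = m.
Proof. by move=> E; rewrite /med /lmed /umed E inf1 sup1; field. Qed.

Lemma uniq_lt (Y : T -> R) m c : measurable_fun setT Y -> Med P Y = [set m] -> c < m ->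
  (P [set w | (Y w <= c)%R] < (2^-1)%:E)%E.
Proof.
move=> mY E cm; rewrite ltNge; apply/negP => h.
have : Med P Y c.
  split => //; apply: le_trans (_ : P [set w | (m <= Y w)%R] <= _)%E.
    by have [_ Mm] : Med P Y m by rewrite E.
  apply: le_measure; rewrite ?inE; try exact: mge.
  by move=> w /=; apply: le_trans (ltW cm).
by rewrite E => /= ce; move: cm; rewrite ce ltxx.
Qed.

Lemma uniq_gt (Y : T -> R) m c : measurable_fun setT Y -> Med P Y = [set m] -> m < c ->
  (P [set w | (c <= Y w)%R] < (2^-1)%:E)%E.
Proof.
move=> mY E cm; rewrite ltNge; apply/negP => h.
have : Med P Y c.
  split => //; apply: le_trans (_ : P [set w | (Y w <= m)%R] <= _)%E.
    by have [Mm _] : Med P Y m by rewrite E.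
  apply: le_measure; rewrite ?inE; try exact: mle.
  by move=> w /= h'; apply: le_trans h' (ltW cm).
by rewrite E => /= ce; move: cm; rewrite ce ltxx.
Qed.

Lemma med_le1 (Y1 Y2 : T -> R) m1 m2 : measurable_fun setT Y1 -> measurable_fun setT Y2 ->
  (forall w, Y1 w <= Y2 w) -> Med P Y1 m1 -> Med P Y2 = [set m2] -> m1 <= m2.
Proof.
move=> mY1 mY2 le12 [_ h1] E2; rewrite leNgt; apply/negP => lt21.
have := uniq_gt mY2 E2 lt21; rewrite ltNge => /negP; apply.
apply: le_trans h1 _; apply: le_measure; rewrite ?inE; try exact: mge.
by move=> w /= h; apply: le_trans h _.
Qed.

Lemma med_le2 (Y1 Y2 : T -> R) m1 m2 : measurable_fun setT Y1 -> measurable_fun setT Y2 ->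
  (forall w, Y1 w <= Y2 w) -> Med P Y1 = [set m1] -> Med P Y2 m2 -> m1 <= m2.
Proof.
move=> mY1 mY2 le12 E1 [h2 _]; rewrite leNgt; apply/negP => lt21.
have := uniq_lt mY1 E1 lt21; rewrite ltNge => /negP; apply.
apply: le_trans h2 _; apply: le_measure; rewrite ?inE; try exact: mle.
by move=> w /= h; apply: le_trans h.
Qed.

Lemma cont_half (F : (set T)^nat) : (forall n, measurable (F n)) ->
  nonincreasing_seq F -> (forall n, ((2^-1)%:E <= P (F n))%E) ->
  ((2^-1)%:E <= P (\bigcap_n F n))%E.
Proof.
move=> mF nF h.
have c : (P \o F) @ \oo --> P (\bigcap_n F n).
  apply: nonincreasing_cvg_mu => //.
  - by rewrite (le_lt_trans (probability_le1 _ _)) ?ltry.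
  - exact: bigcapT_measurable.
rewrite -(cvg_lim _ c) //; apply: lime_ge; first by apply/cvg_ex; eexists; exact: c.
by apply: nearW => n; exact: h.
Qed.

Lemma left_gen (Z : R -> T -> R) (m : R -> R) b t : 0 < b <= 1 ->
  (forall g, 0 <= g <= 1 -> measurable_fun setT (Z g)) ->
  (forall g, 0 <= g <= 1 -> Med P (Z g) = [set m g]) ->
  (forall g h, 0 <= g -> g <= h -> h <= 1 -> forall w, Z g w <= Z h w) ->
  (forall w s, (forall g, 0 < g < b -> Z g w <= s) -> Z b w <= s) ->
  (forall g, 0 < g < b -> m g <= t) -> m b <= t.
Proof.
move=> /andP[b0 b1] mZ MZ monZ ptw H; rewrite leNgt; apply/negP => tb.
pose al n : R := b - b * (n.+2)%:R^-1.
have n2 n : 0 < (n.+2)%:R :> R by rewrite ltr0n.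
have al0 n : 0 < al n.
  rewrite /al subr_gt0 -[ltRHS]mulr1 ltr_pM2l // invf_lt1 // ltr1n //.
have alb n : al n < b by rewrite /al ltrBlDr ltrDl mulr_gt0 // invr_gt0.
have al01 n : 0 <= al n <= 1 by rewrite ltW //= ltW // (lt_le_trans (alb n)).
have almon n k : (n <= k)%N -> al n <= al k.
  move=> nk; rewrite /al lerD2l lerN2 ler_wpM2l ?(ltW b0) // lef_pV2 ?posrE // ler_nat.
  by rewrite ltnS ltnS.
have b01 : 0 <= b <= 1 by rewrite ltW.
pose F n := [set w | Z (al n) w <= t].
have mF n : measurable (F n) by apply: mle; apply: mZ.
have nF : nonincreasing_seq F.
  move=> n k nk; apply/subsetPset => w; rewrite /F /= => h.
  by apply: le_trans _ h; exact: (monZ _ _ (ltW (al0 n)) (almon _ _ nk) (andP (al01 k)).2 w).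
have hF n : ((2^-1)%:E <= P (F n))%E.
  have [h _] : Med P (Z (al n)) (m (al n)) by rewrite MZ.
  apply: le_trans h _; apply: le_measure; rewrite ?inE; try (apply: mle; apply: mZ; done); try exact: mF.
  by move=> w /= h; apply: le_trans h _; apply: H; rewrite al0 alb.
have hc := cont_half mF nF hF.
have := uniq_lt (mZ b b01) (MZ b b01) tb; rewrite ltNge => /negP; apply.
apply: le_trans hc _; apply: le_measure; rewrite ?inE; try (apply: mle; apply: mZ; done).
  by apply: bigcapT_measurable.
move=> w /= hw; apply: ptw => g /andP[g0 gb].
have bg : 0 < b - g by rewrite subr_gt0.
pose n := Num.bound (b / (b - g)).
have hn : b / (b - g) < n%:R by apply: archi_boundP; rewrite divr_ge0 // ltW.
have gal : g <= al n.
  rewrite ltr_pdivrMr // in hn.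
  have nn : n%:R <= (n.+2)%:R :> R by rewrite ler_nat (leq_trans (leqnSn _) (leqnSn _)).
  have h1 : b < (b - g) * (n.+2)%:R.
    apply: lt_le_trans hn _; rewrite mulrC; apply: ler_wpM2l => //; exact: ltW.
  have h2 : b * (n.+2)%:R^-1 < b - g by rewrite ltr_pdivrMr.
  by rewrite /al lerBrDr -lerBrDl; exact: ltW.
apply: le_trans (hw n I); apply: monZ; rewrite ?(ltW g0) //; exact: (andP (al01 n)).2.
Qed.

Lemma right_gen (Z : R -> T -> R) (m : R -> R) t :
  (forall g, 0 <= g <= 1 -> measurable_fun setT (Z g)) ->
  (forall g, 0 <= g <= 1 -> Med P (Z g) = [set m g]) ->
  (forall g h, 0 <= g -> g <= h -> h <= 1 -> forall w, Z g w <= Z h w) ->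
  (forall w s, (forall g, 0 < g <= 1 -> s <= Z g w) -> s <= Z 0 w) ->
  m 0 < t -> exists2 g, 0 < g <= 1 & m g < t.
Proof.
move=> mZ MZ monZ ptw mt.
have [//|H] := pselect (exists2 g, 0 < g <= 1 & m g < t).
have H' g : 0 < g <= 1 -> t <= m g.
  by move=> hg; rewrite leNgt; apply/negP => mt'; apply: H; exists g.
exfalso.
pose al n : R := (n.+1)%:R^-1.
have n1 n : 0 < (n.+1)%:R :> R by rewrite ltr0n.
have al0 n : 0 < al n by rewrite invr_gt0.
have al1 n : al n <= 1 by rewrite invf_le1 // ler1n.
have al01 n : 0 <= al n <= 1 by rewrite ltW //=.
have almon n k : (n <= k)%N -> al k <= al n.
  by move=> nk; rewrite /al lef_pV2 ?posrE // ler_nat ltnS.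
have l01 : 0 <= (0:R) <= 1 by rewrite lexx ler01.
pose F n := [set w | t <= Z (al n) w].
have mF n : measurable (F n) by apply: mge; apply: mZ.
have nF : nonincreasing_seq F.
  move=> n k nk; apply/subsetPset => w; rewrite /F /= => h.
  by apply: le_trans h _; apply: monZ; rewrite ?(ltW (al0 k)) ?almon ?al01.
have hF n : ((2^-1)%:E <= P (F n))%E.
  have [_ h] : Med P (Z (al n)) (m (al n)) by rewrite MZ.
  apply: le_trans h _; apply: le_measure; rewrite ?inE; try (apply: mge; apply: mZ; done); try exact: mF.
  by move=> w /= h; apply: le_trans h; apply: H'; rewrite al0 al1.
have hc := cont_half mF nF hF.
have := uniq_gt (mZ 0 l01) (MZ 0 l01) mt; rewrite ltNge => /negP; apply.
apply: le_trans hc _; apply: le_measure; rewrite ?inE; try (apply: mge; apply: mZ; done).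
  by apply: bigcapT_measurable.
move=> w /= hw; apply: ptw => g /andP[g0 g1].
pose n := Num.bound (g^-1).
have hn : g^-1 < n%:R by apply: archi_boundP; rewrite invr_ge0 ltW.
have alg : al n <= g.
  rewrite /al -[leRHS]invrK lef_pV2 ?posrE ?invr_gt0 //.
  by apply: ltW; apply: lt_le_trans hn _; rewrite ler_nat.
by apply: le_trans (hw n I) _; apply: monZ; rewrite ?al01 ?(ltW (al0 n)).
Qed.

Lemma Med_opp (Y : T -> R) m : Med P Y = [set m] -> Med P (fun w => - Y w) = [set - m].
Proof.
move=> E; apply/seteqP; split => x /=.
  move=> [h1 h2].
  have : Med P Y (- x).
    split.
      by move: h2; congr (_ <= P _)%E; apply/seteqP; split => w /=; rewrite lerNr.
    by move: h1; congr (_ <= P _)%E; apply/seteqP; split => w /=; rewrite lerNl.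
  by rewrite E /= => <-; rewrite opprK.
move=> ->; have [h1 h2] : Med P Y m by rewrite E.
split.
  by move: h2; congr (_ <= P _)%E; apply/seteqP; split => w /=; rewrite lerN2.
by move: h1; congr (_ <= P _)%E; apply/seteqP; split => w /=; rewrite lerN2.
Qed.

End Meas.

Section Main.
Context {R : realType} {d : measure_display} {T : measurableType d} (P : probability T R).
Variable X : T -> R -> R.
Hypothesis hX : fuzzy_rv X.

Definition Lf a w := lA (X w) a.
Definition Uf a w := rA (X w) a.

Lemma XFc w : isFc (X w). Proof. exact: hX.1. Qed.

Lemma Uf_ge a r : 0 <= a <= 1 -> measurable [set w | r <= Uf a w].
Proof.
move=> ha.
have -> : [set w | r <= Uf a w] =
    \bigcup_n [set w | level (X w) a `&` `[r, r + n%:R]%classic !=set0].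
  apply/seteqP; split => w /=.
    move=> rU; have [E lr] := level_lr (XFc w) ha.
    exists (Num.bound (Uf a w - r)) => //=.
    exists (Uf a w); split; first by rewrite E /= lr lexx.
    rewrite set_itvcc /= rU /= -lerBlDl ltW // archi_boundP // subr_ge0 //.
  move=> [n _ [y [ly]]]; rewrite set_itvcc /= => /andP[ry _].
  have [E _] := level_lr (XFc w) ha; move: ly; rewrite E /= => /andP[_ yU].
  exact: le_trans yU.
apply: bigcupT_measurable => n; apply: hX.2 => //; exact: segment_compact.
Qed.

Lemma Lf_le a r : 0 <= a <= 1 -> measurable [set w | Lf a w <= r].
Proof.
move=> ha.
have -> : [set w | Lf a w <= r] =
    \bigcup_n [set w | level (X w) a `&` `[r - n%:R, r]%classic !=set0].
  apply/seteqP; split => w /=.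
    move=> rL; have [E lr] := level_lr (XFc w) ha.
    exists (Num.bound (r - Lf a w)) => //=.
    exists (Lf a w); split; first by rewrite E /= lr lexx.
    rewrite set_itvcc /= rL andbT lerBlDr -lerBlDl ltW // archi_boundP // subr_ge0 //.
  move=> [n _ [y [ly]]]; rewrite set_itvcc /= => /andP[_ yr].
  have [E _] := level_lr (XFc w) ha; move: ly; rewrite E /= => /andP[Ly _].
  exact: le_trans Ly yr.
apply: bigcupT_measurable => n; apply: hX.2 => //; exact: segment_compact.
Qed.

Lemma mUf a : 0 <= a <= 1 -> measurable_fun setT (Uf a).
Proof.
move=> ha; apply: (measurability (@measurable_realfun.RGenCInfty.G R)) => [|/= _ [_] [r] -> <-].
  exact: measurable_realfun.RGenCInfty.measurableE.
rewrite setTI; have := Uf_ge r ha; congr measurable.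
by apply/seteqP; split => w /=; rewrite in_itv /= andbT.
Qed.

Lemma mLf a : 0 <= a <= 1 -> measurable_fun setT (Lf a).
Proof.
move=> ha.
have -> : Lf a = \- (fun w => - Lf a w) by apply: funext => w /=; rewrite opprK.
apply: measurable_realfun.measurable_funN; apply: (measurability (@measurable_realfun.RGenCInfty.G R)) => [|/= _ [_] [r] -> <-].
  exact: measurable_realfun.RGenCInfty.measurableE.
rewrite setTI; have := Lf_le (- r) ha; congr measurable.
by apply/seteqP; split => w /=; rewrite in_itv /= andbT lerNr.
Qed.

Hypothesis hU : forall u a, dir_set u -> unit_int a -> exists m, Med P (sX X u a) = [set m].

Definition lm a := - med P (sX X (-1) a).
Definition um a := med P (sX X 1 a).

Lemma dir1 : dir_set (1 : R). Proof. by right. Qed.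
Lemma dirN1 : dir_set (-1 : R). Proof. by left. Qed.

Lemma MedU a : 0 <= a <= 1 -> Med P (Uf a) = [set um a].
Proof.
move=> ha; have [m E] := hU dir1 ha.
by rewrite /um (med1 E); exact: E.
Qed.

Lemma MedL a : 0 <= a <= 1 -> Med P (Lf a) = [set lm a].
Proof.
move=> ha; have [m E] := hU dirN1 ha.
rewrite /lm (med1 E); exact: (Med_opp E).
Qed.

Lemma inMed (Y : T -> R) m : Med P Y = [set m] -> Med P Y m.
Proof. by move=> ->. Qed.

Lemma mNUf a : 0 <= a <= 1 -> measurable_fun setT (fun w => - Uf a w).
Proof. by move=> ha; apply: measurable_realfun.measurable_funN; apply: mUf. Qed.

Lemma MedNU a : 0 <= a <= 1 -> Med P (fun w => - Uf a w) = [set - um a].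
Proof. by move=> ha; apply: Med_opp; apply: MedU. Qed.

Lemma h_lmum a : 0 <= a <= 1 -> lm a <= um a.
Proof.
move=> ha; apply: (med_le2 (mLf ha) (mUf ha)) (MedL ha) (inMed (MedU ha)).
by move=> w; have [_ ] := level_lr (XFc w) ha.
Qed.

Lemma h_mono a b : 0 <= a -> a <= b -> b <= 1 -> lm a <= lm b /\ um b <= um a.
Proof.
move=> a0 ab b1.
have ha : 0 <= a <= 1 by rewrite a0 (le_trans ab b1).
have hb : 0 <= b <= 1 by rewrite (le_trans a0 ab) b1.
split.
  apply: (med_le2 (mLf ha) (mLf hb)) (MedL ha) (inMed (MedL hb)).
  by move=> w; have [] := lr_mono (XFc w) a0 ab b1.
apply: (med_le2 (mUf hb) (mUf ha)) (MedU hb) (inMed (MedU ha)).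
by move=> w; have [] := lr_mono (XFc w) a0 ab b1.
Qed.

Lemma h_lmleft b t : 0 < b <= 1 -> (forall g, 0 < g < b -> lm g <= t) -> lm b <= t.
Proof.
move=> hb; apply: (left_gen (Z := Lf)) => //.
- exact: mLf.
- exact: MedL.
- by move=> g h g0 gh h1 w; have [] := lr_mono (XFc w) g0 gh h1.
- by move=> w s H; apply: lA_left (XFc w) hb H.
Qed.

Lemma h_umleft b t : 0 < b <= 1 -> (forall g, 0 < g < b -> t <= um g) -> t <= um b.
Proof.
move=> hb H; rewrite -lerN2.
apply: (left_gen (Z := fun g w => - Uf g w) (m := fun g => - um g)) => //.
- exact: mNUf.
- exact: MedNU.
- by move=> g h g0 gh h1 w; rewrite lerN2; have [] := lr_mono (XFc w) g0 gh h1.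
- move=> w s H'; rewrite lerNl; apply: rA_left (XFc w) hb _ => g hg.
  by rewrite lerNl; apply: H'.
- by move=> g hg; rewrite lerN2; apply: H.
Qed.

Lemma h_lmright t : lm 0 < t -> exists2 g, 0 < g <= 1 & lm g < t.
Proof.
apply: (right_gen (Z := Lf)).
- exact: mLf.
- exact: MedL.
- by move=> g h g0 gh h1 w; have [] := lr_mono (XFc w) g0 gh h1.
- by move=> w s H; apply: lA_right0 (XFc w) H.
Qed.

Lemma h_umright t : t < um 0 -> exists2 g, 0 < g <= 1 & t < um g.
Proof.
move=> h.
have [g hg hg2] : exists2 g, 0 < g <= 1 & - um g < - t.
  apply: (right_gen (Z := fun g w => - Uf g w) (m := fun g => - um g)).
- exact: mNUf.
- exact: MedNU.
- by move=> g h' g0 gh h1 w; rewrite lerN2; have [] := lr_mono (XFc w) g0 gh h1.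
- move=> w s H; rewrite lerNr; apply: rA_right0 (XFc w) _ => g hg.
  by rewrite -lerNr; apply: H.
- by rewrite ltrN2.
- by exists g => //; rewrite -ltrN2.
Qed.

Definition medSi := Mb lm um.

Lemma medSi_Fc : isFc medSi.
Proof. exact (Mb_Fc h_lmum h_mono h_lmleft h_umleft h_lmright h_umright). Qed.

Lemma medSi_lr a : 0 <= a <= 1 -> lA medSi a = lm a /\ rA medSi a = um a.
Proof. move=> ha; exact (Mb_lr h_lmum h_mono h_lmleft h_umleft h_lmright h_umright ha). Qed.

Lemma medSi_supf u a : dir_set u -> unit_int a -> supf medSi u a = med P (sX X u a).
Proof.
move=> [->|->] ha; have [h1 h2] := medSi_lr ha.
  by move: h1; rewrite /lA /lm => /eqP; rewrite eqr_opp => /eqP.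
by move: h2; rewrite /rA /um.
Qed.

Lemma supf_eq_medSi A : isFc A ->
  (forall u a, dir_set u -> unit_int a -> supf A u a = med P (sX X u a)) -> A = medSi.
Proof.
move=> hA H; apply: Fc_eq => //; first exact: medSi_Fc.
move=> a ha; rewrite /lA /rA !H ?medSi_supf //; try exact: dir1; try exact: dirN1.
Qed.

Lemma Med_s_eq : Med_s P X = [set medSi].
Proof.
apply/seteqP; split => A /=.
  move=> [hA H]; apply: supf_eq_medSi => // u a hu ha.
  have [m E] := hU hu ha; have := H u a hu ha; rewrite E (med1 E) => ->.
  by [].
move=> ->; split; first exact: medSi_Fc.
move=> u a hu ha; have [m E] := hU hu ha.
by rewrite medSi_supf // (med1 E) E.
Qed.

Lemma med_ge0 (Z : T -> R) : (forall w, 0 <= Z w) -> 0 <= med P Z.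
Proof.
move=> Z0.
have MZ x : Med P Z x -> 0 <= x.
  move=> [h _]; rewrite leNgt; apply/negP => x0.
  have : [set w | Z w <= x] = set0.
    apply/seteqP; split => // w /= h'; have := le_lt_trans h' x0.
    by rewrite ltNge Z0.
  move=> E; move: h; rewrite E measure0 lee_fin leNgt => /negP; apply.
  by rewrite invr_gt0.
rewrite /med divr_ge0 // addr_ge0 //.
  rewrite /lmed; have [E|/set0P ne] := eqVneq (Med P Z) set0.
    by rewrite E inf0.
  by apply: lb_le_inf => // x /MZ.
rewrite /umed; have [E|/set0P [x Mx]] := eqVneq (Med P Z) set0.
  by rewrite E sup0.
have [hs|hs] := pselect (has_sup (Med P Z)).
  by apply: le_trans (MZ _ Mx) _; apply: sup_upper_bound.
by rewrite sup_out.
Qed.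

Lemma fratio_ge0 (c m : R) : 0 <= c -> 0 <= m -> (0 <= fratio c m)%E.
Proof.
move=> c0 m0; rewrite /fratio; case: ifP => _; first by case: ifP.
by rewrite lee_fin divr_ge0.
Qed.

Lemma MAD_ge0 Y : 0 <= MAD P Y.
Proof. by apply: med_ge0 => w; exact: normr_ge0. Qed.

Lemma Oout_ge0 B : (0 <= Oout P B X)%E.
Proof.
apply: (le_trans (fratio_ge0 (normr_ge0 (supf B 1 0 - med P (sX X 1 0))) (MAD_ge0 (sX X 1 0)))).
apply: ereal_sup_ubound; exists 1, 0; split => //; first exact: dir1.
by rewrite /unit_int /= lexx ler01.
Qed.

Lemma Oout_medSi : Oout P medSi X = 0%E.
Proof.
apply/le_anti; rewrite Oout_ge0 andbT.
apply: ge_ereal_sup => _ [u [a [hu ha ->]]].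
by rewrite medSi_supf // subrr normr0 /fratio; case: ifP => _; rewrite ?eqxx ?mul0r.
Qed.

Lemma DFP_medSi : D_FP P medSi X = 1.
Proof. rewrite /D_FP Oout_medSi; change ((1 + 0 : R)^-1 = 1); by rewrite addr0 invr1. Qed.

Lemma DFP_le1 B : D_FP P B X <= 1.
Proof.
rewrite /D_FP; have := Oout_ge0 B; case: (Oout P B X) => // o; rewrite lee_fin => o0.
by rewrite invf_le1 ?lerDl // ltr_wpDr.
Qed.

Lemma Med_DFP_eq : Med_DFP P X = [set medSi].
Proof.
apply/seteqP; split => A /=.
  move=> [hA H]; have := H _ medSi_Fc; rewrite DFP_medSi => h1.
  have Ole : (Oout P A X <= 0)%E.
    move: h1; rewrite /D_FP; have := Oout_ge0 A.
    case: (Oout P A X) => [r0|//|//]; rewrite ?ler10 // lee_fin => o0.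
    rewrite invf_ge1 ?ltr_wpDr // => h; rewrite lee_fin; lra.
  apply: supf_eq_medSi => // u a hu ha.
  have : (fratio (`|supf A u a - med P (sX X u a)|)%R (MAD P (sX X u a)) <= 0)%E.
    apply: le_trans Ole; apply: ereal_sup_ubound; exists u, a; split => //.
  rewrite /fratio; case: ifP => [/eqP m0|/negbT m0].
    by case: ifP => [/eqP/normr0_eq0/eqP|]; [rewrite subr_eq0 => /eqP|].
  have mpos : 0 < MAD P (sX X u a) by rewrite lt_neqAle eq_sym m0 MAD_ge0.
  by rewrite lee_fin ler_pdivrMr // mul0r normr_le0 subr_eq0 => /eqP.
move=> ->; split; first exact: medSi_Fc.
by move=> B _; rewrite DFP_medSi DFP_le1.
Qed.

Lemma T_inh : exists w : T, True.
Proof.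
have : (setT : set T) !=set0.
  apply/set0P/negP => /eqP E; have := probability_setT P.
  by rewrite E measure0 => /eqP; rewrite eq_sym onee_eq0.
by move=> [w _]; exists w.
Qed.

Definition Inf (Y : T -> R) := inf (range (fun w => X w (Y w))).

Lemma Inf_le Y w : Inf Y <= X w (Y w).
Proof.
apply: ge_inf; last by exists w.
by exists 0 => _ [w' _ <-]; apply: (Fc_ge0 _ (XFc w')).
Qed.

Lemma Inf_ge al Y : (forall w, al <= X w (Y w)) -> al <= Inf Y.
Proof.
move=> H; have [w0 _] := T_inh.
apply: lb_le_inf; first by exists (X w0 (Y w0)), w0.
by move=> _ [w _ <-].
Qed.

Definition Gset t := [set Inf Y | Y in [set Y : T -> R | measurable_fun setT Y /\ Med P Y t]].

Lemma Med_cst t : Med P (fun _ => t) t.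
Proof.
rewrite /Med /=.
have -> : [set w : T | t <= t] = setT by apply/seteqP; split => // w _ /=.
by split; rewrite probability_setT lee_fin invf_le1 // ler1n.
Qed.

Lemma Gset_ne t : Gset t !=set0.
Proof.
exists (Inf (fun _ => t)), (fun _ => t) => //; split; first exact: measurable_cst.
exact: Med_cst.
Qed.

Lemma Gset_sup t : has_sup (Gset t).
Proof.
split; first exact: Gset_ne.
have [w0 _] := T_inh.
exists 1 => _ [Y _ <-]; apply: le_trans (Inf_le Y w0) _; exact: (Fc_le1 _ (XFc w0)).
Qed.

Lemma medGr_eq : med_Gr P X = medSi.
Proof.
apply: funext => t; apply/le_anti/andP; split.
  apply: ge_sup; first exact: Gset_ne.
  move=> _ [Y [mY MY] <-].
  have [b0|b0] := leP (Inf Y) 0.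
    by apply: le_trans b0 _; exact: (andP (Mb_01 lm um t)).1.
  have [w0 _] := T_inh.
  have b1 : Inf Y <= 1 by apply: le_trans (Inf_le Y w0) _; exact: (Fc_le1 _ (XFc w0)).
  have hb : 0 <= Inf Y <= 1 by rewrite ltW.
  have lev w : Lf (Inf Y) w <= Y w <= Uf (Inf Y) w.
    have [E _] := level_lr (XFc w) hb.
    have : level (X w) (Inf Y) (Y w) by rewrite levelE ?gt_eqF //=; exact: Inf_le.
    by rewrite E.
  apply: St_ub; rewrite /St /= hb /=; apply/andP; split.
    apply: (med_le2 (mLf hb) mY) (MedL hb) MY.
    by move=> w; case/andP: (lev w).
  apply: (med_le1 mY (mUf hb)) MY (MedU hb).
  by move=> w; case/andP: (lev w).
have Gin Y : measurable_fun setT Y -> Med P Y t -> Inf Y <= sup (Gset t).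
  by move=> mY MY; apply: sup_upper_bound; [exact: Gset_sup | exists Y].
have [E|/set0P ne] := eqVneq (St lm um t) set0.
  rewrite /medSi /Mb E sup0; apply: le_trans (Gin _ (measurable_cst t) (Med_cst t)).
  by apply: Inf_ge => w; apply: (Fc_ge0 _ (XFc w)).
apply: ge_sup => // al /andP[hal /andP[l1 l2]].
pose Y w := Num.max (Lf al w) (Num.min t (Uf al w)).
have mY : measurable_fun setT Y.
  apply: measurable_realfun.measurable_maxr; first exact: mLf.
  by apply: measurable_realfun.measurable_minr; [exact: measurable_cst | exact: mUf].
have lev w : Lf al w <= Y w <= Uf al w.
  have [_ lu] := level_lr (XFc w) hal.
  rewrite /Y le_max lexx /= ge_max lu /= ge_min lexx orbT.
  done.
have MY : Med P Y t.
  have [h1 _] := inMed (MedL hal); have [_ h2] := inMed (MedU hal).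
  split.
    apply: le_trans h1 _; apply: le_measure; rewrite ?inE; try (apply: mle; first exact: mLf); try (apply: mle; exact: mY).
    move=> w /= h; rewrite /Y ge_max ge_min lexx /= andbT.
    exact: le_trans h l1.
  apply: le_trans h2 _; apply: le_measure; rewrite ?inE; try (apply: mge; first exact: mUf); try (apply: mge; exact: mY).
  move=> w /= h; rewrite /Y le_max le_min lexx /= (le_trans l2 h) orbT.
  done.
apply: le_trans (Gin _ mY MY); apply: Inf_ge => w.
have [->|a0] := eqVneq al 0; first exact: (Fc_ge0 _ (XFc w)).
have [E _] := level_lr (XFc w) hal.
have : level (X w) al (Y w) by rewrite E; exact: lev w.
by rewrite levelE.
Qed.


End Main.

Unset Implicit Arguments. Set Strict Implicit.

Theorem theorem4p7 (R : realType) (d : measure_display) (T : measurableType d)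
  (P : probability T R) (X : T -> R -> R) :
  fuzzy_rv X -> nondegenerate_frv P X ->
  (forall u a, dir_set u -> unit_int a -> exists m, Med P (sX X u a) = [set m]) ->
  exists medSi : R -> R,
    [/\ isFc medSi,
        (forall u a, dir_set u -> unit_int a -> supf medSi u a = med P (sX X u a)),
        Med_s P X = [set medSi],
        Med_DFP P X = [set medSi]
      & [set med_Gr P X] = [set medSi]].
Proof.
move=> hX _ hU.
exists (medSi P X); split.
- exact: (medSi_Fc hX hU).
- exact: (medSi_supf hX hU).
- exact: (Med_s_eq hX hU).
- exact: (Med_DFP_eq hX hU).
- by rewrite (medGr_eq hX hU).
Qed.
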